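(* Let $\Gamma$ be a finite set of formulas and $\alpha$ a formula, all in negation normal form, of the language $\{\rightarrow,\sim,\neg\}$. Then $\Gamma\vdash_{\text{Ł}(\neg)}\alpha$ if and only if there is a finite set $\Delta$ consisting of instances of the $\neg$-axioms such that $\boxdot\Gamma,\Delta\vdash_{\text{Ł}}\alpha$.
   Context: Formulas are built from a countable set of propositional variables using the connectives $\rightarrow$ (binary), $\sim$ and $\neg$ (unary). Write $\alpha\leftrightarrow\beta$ as shorthand for the pair of formulas $\alpha\rightarrow\beta$ and $\beta\rightarrow\alpha$ (an axiom of the form $\alpha\leftrightarrow\beta$ means both are axioms). Łukasiewicz logic $\vdash_{\text{Ł}}$ is axiomatized by the axiom schemes $\alpha\rightarrow(\beta\rightarrow\alpha)$; $(\alpha\rightarrow\beta)\rightarrow((\beta\rightarrow\gamma)\rightarrow(\alpha\rightarrow\gamma))$; $((\alpha\rightarrow\beta)\rightarrow\beta)\rightarrow((\beta\rightarrow\alpha)\rightarrow\alpha)$; $({\sim}\beta\rightarrow{\sim}\alpha)\rightarrow(\alpha\rightarrow\beta)$; and the rule Modus Ponens $\alpha,\alpha\rightarrow\beta/\beta$. When $\vdash_{\text{Ł}}$ is applied to formulas of the language $\{\rightarrow,\sim,\neg\}$, every formula whose main connective is $\neg$ is treated as an atomic formula. The logic $\text{Ł}(\neg)$ (consequence relation $\vdash_{\text{Ł}(\neg)}$) extends Łukasiewicz logic by the $\neg$-axioms $\neg\neg\alpha\leftrightarrow\alpha$; $\neg{\sim}\alpha\leftrightarrow{\sim}\neg\alpha$;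 $({\sim}\neg\alpha\rightarrow{\sim}\neg\beta)\leftrightarrow{\sim}\neg(\alpha\rightarrow\beta)$; and the rule $\alpha/{\sim}\neg\alpha$. A formula is in negation normal form if it is built using $\rightarrow,\sim$ only from literals of the form $p$ or $\neg p$ with $p$ a propositional variable. For a set $\Gamma$ of formulas, $\boxdot\Gamma:=\{{\sim}\neg\gamma:\gamma\in\Gamma\}\cup\Gamma$. *)

(* Defs.v *)
From Stdlib Require Import List.
Import ListNotations.

Inductive form : Type :=
| Var : nat -> form
| Imp : form -> form -> form
| Tl  : form -> form             (* ~ alpha  (Łukasiewicz negation) *)
| Ng  : form -> form.            (* ¬ alpha  (the additional negation) *)

Inductive nnf : form -> Prop :=
| nnf_var : forall p, nnf (Var p)
| nnf_nvar : forall p, nnf (Ng (Var p))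
| nnf_imp : forall a b, nnf a -> nnf b -> nnf (Imp a b)
| nnf_tl : forall a, nnf a -> nnf (Tl a).

(* Axiom schemes of Łukasiewicz logic (¬-formulas are simply treated as atoms). *)
Inductive luk_axiom : form -> Prop :=
| LA1 : forall a b, luk_axiom (Imp a (Imp b a))
| LA2 : forall a b c,
    luk_axiom (Imp (Imp a b) (Imp (Imp b c) (Imp a c)))
| LA3 : forall a b,
    luk_axiom (Imp (Imp (Imp a b) b) (Imp (Imp b a) a))
| LA4 : forall a b, luk_axiom (Imp (Imp (Tl b) (Tl a)) (Imp a b)).

(* Instances of the ¬-axioms; each "phi <-> psi" contributes both implications. *)
Inductive neg_axiom : form -> Prop :=
| NA1a : forall a, neg_axiom (Imp (Ng (Ng a)) a)
| NA1b : forall a, neg_axiom (Imp a (Ng (Ng a)))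
| NA2a : forall a, neg_axiom (Imp (Ng (Tl a)) (Tl (Ng a)))
| NA2b : forall a, neg_axiom (Imp (Tl (Ng a)) (Ng (Tl a)))
| NA3a : forall a b,
    neg_axiom (Imp (Imp (Tl (Ng a)) (Tl (Ng b))) (Tl (Ng (Imp a b))))
| NA3b : forall a b,
    neg_axiom (Imp (Tl (Ng (Imp a b))) (Imp (Tl (Ng a)) (Tl (Ng b)))).

Inductive ded_L (G : form -> Prop) : form -> Prop :=
| dL_hyp : forall a, G a -> ded_L G a
| dL_ax : forall a, luk_axiom a -> ded_L G a
| dL_mp : forall a b, ded_L G a -> ded_L G (Imp a b) -> ded_L G b.

Inductive ded_LN (G : form -> Prop) : form -> Prop :=
| dN_hyp : forall a, G a -> ded_LN G a
| dN_ax : forall a, luk_axiom a -> ded_LN G a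
| dN_nax : forall a, neg_axiom a -> ded_LN G a
| dN_mp : forall a b, ded_LN G a -> ded_LN G (Imp a b) -> ded_LN G b
| dN_rule : forall a, ded_LN G a -> ded_LN G (Tl (Ng a)).

Definition boxdot (G : list form) : list form :=
  map (fun g => Tl (Ng g)) G ++ G.

(* Main.v *)
Require Import Defs.
From Stdlib Require Import List.
Import ListNotations.

Definition N (x : form) : form := Tl (Ng x).
Definition E (x : form) : form := Tl (Tl (Ng (Ng x))).

Lemma mp (G : form -> Prop) a b : ded_L G a -> ded_L G (Imp a b) -> ded_L G b.
Proof. apply dL_mp. Qed.

Lemma ax (G : form -> Prop) a : luk_axiom a -> ded_L G a.
Proof. apply dL_ax. Qed.

Lemma hs (G : form -> Prop) a b c :
  ded_L G (Imp a b) -> ded_L G (Imp b c) -> ded_L G (Imp a c).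
Proof. intros H1 H2. exact (mp _ _ _ H2 (mp _ _ _ H1 (ax _ _ (LA2 a b c)))). Qed.

Lemma assertion (G : form -> Prop) b c : ded_L G (Imp b (Imp (Imp b c) c)).
Proof. apply (hs _ _ _ _ (ax _ _ (LA1 b (Imp c b))) (ax _ _ (LA3 c b))). Qed.

Lemma exch (G : form -> Prop) a b c :
  ded_L G (Imp (Imp a (Imp b c)) (Imp b (Imp a c))).
Proof.
  eapply hs. apply (ax _ _ (LA2 a (Imp b c) c)).
  apply (mp _ _ _ (assertion G b c) (ax _ _ (LA2 b (Imp (Imp b c) c) (Imp a c)))).
Qed.

Lemma thm_elim (G : form -> Prop) T a : ded_L G T -> ded_L G (Imp (Imp T a) a).
Proof. intro H. exact (mp _ _ _ H (assertion G T a)). Qed.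

Lemma idt (G : form -> Prop) a : ded_L G (Imp a a).
Proof.
  eapply hs. apply (ax _ _ (LA1 a (Imp a (Imp a a)))).
  apply thm_elim. apply ax. constructor.
Qed.

Lemma prefix (G : form -> Prop) a b c :
  ded_L G (Imp b c) -> ded_L G (Imp (Imp a b) (Imp a c)).
Proof.
  intro H. exact (mp _ _ _ H (mp _ _ _ (ax _ _ (LA2 a b c)) (exch _ _ _ _))).
Qed.

Lemma suffix (G : form -> Prop) a b c :
  ded_L G (Imp a b) -> ded_L G (Imp (Imp b c) (Imp a c)).
Proof. intro H. exact (mp _ _ _ H (ax _ _ (LA2 a b c))). Qed.

Lemma mono (G : form -> Prop) a a' b b' :
  ded_L G (Imp a' a) -> ded_L G (Imp b b') -> ded_L G (Imp (Imp a b) (Imp a' b')).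
Proof. intros H1 H2. eapply hs. apply suffix, H1. apply prefix, H2. Qed.

Lemma dne (G : form -> Prop) a : ded_L G (Imp (Tl (Tl a)) a).
Proof.
  set (T := Imp a (Imp a a)).
  eapply hs. eapply hs. apply (ax _ _ (LA1 (Tl (Tl a)) (Tl (Tl T)))).
  eapply hs. apply (ax _ _ (LA4 (Tl a) (Tl T))). apply (ax _ _ (LA4 T a)).
  apply thm_elim. apply ax. constructor.
Qed.

Lemma dni (G : form -> Prop) a : ded_L G (Imp a (Tl (Tl a))).
Proof. exact (mp _ _ _ (dne G (Tl a)) (ax _ _ (LA4 a (Tl (Tl a))))). Qed.

Lemma contra (G : form -> Prop) a b :
  ded_L G (Imp a b) -> ded_L G (Imp (Tl b) (Tl a)).
Proof.
  intro H. refine (mp _ _ _ _ (ax _ _ (LA4 (Tl b) (Tl a)))).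
  eapply hs. apply dne. eapply hs. apply H. apply dni.
Qed.

Fixpoint pushN (f : form) : form :=
  match f with
  | Imp a b => Imp (pushN a) (pushN b)
  | Tl a => Tl (pushN a)
  | _ => N f
  end.

Lemma nax (G : form -> Prop) (HG : forall x, neg_axiom x -> G x) d :
  neg_axiom d -> ded_L G d.
Proof. intro H. apply dL_hyp, HG, H. Qed.

Local Ltac nx HG := apply (nax _ HG); constructor.

Lemma x_E (G : form -> Prop) (HG : forall x, neg_axiom x -> G x) x :
  ded_L G (Imp x (E x)).
Proof. eapply hs. nx HG. apply dni. Qed.

Lemma E_x (G : form -> Prop) (HG : forall x, neg_axiom x -> G x) x :
  ded_L G (Imp (E x) x).
Proof. eapply hs. apply dne. nx HG. Qed.

Lemma pushN_N (G : form -> Prop) (HG : forall x, neg_axiom x -> G x) f :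
  ded_L G (Imp (pushN f) (N f)) /\ ded_L G (Imp (N f) (pushN f)).
Proof.
  induction f as [p|a [Ha1 Ha2] b [Hb1 Hb2]|a [Ha1 Ha2]|a]; simpl;
    try (split; apply idt).
  - split.
    + apply hs with (b := Imp (N a) (N b)). apply mono. exact Ha2. exact Hb1. nx HG.
    + apply hs with (b := Imp (N a) (N b)). nx HG. apply mono. exact Ha1. exact Hb2.
  - split.
    + apply hs with (b := Tl (N a)). apply contra, Ha2. apply contra. nx HG.
    + apply hs with (b := Tl (N a)). apply contra. nx HG. apply contra, Ha1.
Qed.

Lemma N_from_push (G : form -> Prop) (HG : forall x, neg_axiom x -> G x) f :
  ded_L G (pushN f) -> ded_L G (N f).
Proof. intro H. exact (mp _ _ _ H (proj1 (pushN_N G HG f))). Qed.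

Lemma luk_pushN a : luk_axiom a -> luk_axiom (pushN a).
Proof. destruct 1; simpl; constructor. Qed.

Lemma neg_pushN (G : form -> Prop) (HG : forall x, neg_axiom x -> G x) d :
  neg_axiom d -> ded_L G (pushN d).
Proof.
  destruct 1; simpl.
  - apply hs with (b := N a). apply contra. nx HG. apply (proj2 (pushN_N G HG a)).
  - eapply hs. apply (proj1 (pushN_N G HG a)). apply contra. nx HG.
  - apply hs with (b := Tl (Tl a)). apply contra. nx HG. eapply hs. apply dne. apply (x_E G HG).
  - eapply hs. apply (E_x G HG). eapply hs. apply dni. apply contra. nx HG.
  - eapply hs. apply mono. apply (x_E G HG). apply (E_x G HG). apply (x_E G HG).
  - eapply hs. apply (E_x G HG). apply mono. apply (E_x G HG). apply (x_E G HG).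
Qed.

Definition SS (Gamma : list form) : form -> Prop :=
  fun x => In x (boxdot Gamma) \/ neg_axiom x.

Lemma box Gamma f : ded_L (SS Gamma) f -> ded_L (SS Gamma) (N f).
Proof.
  assert (HG : forall x, neg_axiom x -> SS Gamma x) by (intros; right; auto).
  induction 1 as [a [Hin|Hneg]|a Ha|a b _ IH1 _ IH2].
  - unfold boxdot in Hin. apply in_app_or in Hin. destruct Hin as [Hm|Hg].
    + apply in_map_iff in Hm. destruct Hm as [g [<- Hg]].
      apply (N_from_push _ HG). simpl.
      refine (mp _ _ _ _ (x_E _ HG g)). apply dL_hyp. left.
      unfold boxdot. apply in_or_app. right. exact Hg.
    + apply dL_hyp. left. unfold boxdot. apply in_or_app. left.
      apply (in_map (fun g => Tl (Ng g))). exact Hg.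
  - apply (N_from_push _ HG), (neg_pushN _ HG), Hneg.
  - apply (N_from_push _ HG), dL_ax, luk_pushN, Ha.
  - refine (mp _ _ _ IH1 (mp _ _ _ IH2 _)). apply dL_hyp. right. constructor.
Qed.

Lemma to_SS Gamma f : ded_LN (fun x => In x Gamma) f -> ded_L (SS Gamma) f.
Proof.
  induction 1 as [| | |a b _ IH1 _ IH2|].
  - apply dL_hyp. unfold SS. left. unfold boxdot. apply in_or_app. right. assumption.
  - apply dL_ax. assumption.
  - apply dL_hyp. unfold SS. right. assumption.
  - exact (dL_mp _ a b IH1 IH2).
  - apply box. assumption.
Qed.

Lemma weaken (G H : form -> Prop) f :
  (forall x, G x -> H x) -> ded_L G f -> ded_L H f.
Proof.
  intros HGH. induction 1 as [| |a b _ IH1 _ IH2].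
  - apply dL_hyp; auto.
  - apply dL_ax; auto.
  - exact (dL_mp _ a b IH1 IH2).
Qed.

Lemma compact Gamma f : ded_L (SS Gamma) f ->
  exists Delta, Forall neg_axiom Delta /\
    ded_L (fun x => In x (boxdot Gamma) \/ In x Delta) f.
Proof.
  induction 1 as [a [Hin|Hneg]|a Ha|a b _ [D1 [HD1 IH1]] _ [D2 [HD2 IH2]]].
  - exists []. split. constructor. apply dL_hyp. left. exact Hin.
  - exists [a]. split. constructor; auto. apply dL_hyp. right. left. reflexivity.
  - exists []. split. constructor. apply dL_ax. exact Ha.
  - exists (D1 ++ D2). split. apply Forall_app; auto.
    apply dL_mp with a.
    + eapply weaken; [|exact IH1]. intros x [Hx|Hx]; [left; auto|right; apply in_or_app; auto].
    + eapply weaken; [|exact IH2]. intros x [Hx|Hx]; [left; auto|right; apply in_or_app; auto].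
Qed.

Theorem lemma1 (Gamma : list form) (alpha : form) :
  Forall nnf Gamma -> nnf alpha ->
  (ded_LN (fun x => In x Gamma) alpha <->
   exists Delta : list form,
     Forall neg_axiom Delta /\
     ded_L (fun x => In x (boxdot Gamma) \/ In x Delta) alpha).
Proof.
  intros _ _. split.
  - intro H. apply compact, to_SS, H.
  - intros [Delta [HD H]]. induction H as [a [Hin|Hin]|a Ha|a b _ IH1 _ IH2].
    + unfold boxdot in Hin. apply in_app_or in Hin. destruct Hin as [Hm|Hg].
      * apply in_map_iff in Hm. destruct Hm as [g [<- Hg]].
        apply dN_rule, dN_hyp, Hg.
      * apply dN_hyp, Hg.
    + apply dN_nax. rewrite Forall_forall in HD. auto.
    + apply dN_ax, Ha.
    + exact (dN_mp _ a b IH1 IH2).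
Qed.
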